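(* Let $\chi,m\geq 2$ be integers. Then there exists a constant $\gamma=\gamma(\chi,m)>0$ such that the following holds. Let $F$ be a subhypergraph of a tournament hypergraph associated to $TT_\chi$, with vertex classes $V_1,\dots,V_\chi$. If $|V_i|\geq 1/\gamma$ for each $i\in[\chi]$ and $d(V_i,V_i,V_j)\geq 1-\gamma$ for every arc $(i,j)$ of $TT_\chi$, then $F$ contains a copy of $H(TT_\chi,m)$.
   Context: $TT_\chi$ is the transitive tournament on $[\chi]$. A 3-uniform hypergraph is a tournament hypergraph associated to a tournament $T_\chi$ on $[\chi]$ if its vertex set is partitioned into classes $A_1,\dots,A_\chi$ and its edges are exactly the triples $xyz$ with $x,y\in A_i$, $z\in A_j$, $(i,j)$ an arc of $T_\chi$; $H(T_\chi,m)$ is such a hypergraph with all classes of size $m$. For a 3-graph $F$ and $A,B,C\subseteq V(F)$, $E(A,B,C)$ is the set of ordered triples $(a,b,c)\in A\times B\times C$ of distinct vertices with $abc\in E(F)$, and $d(A,B,C)=|E(A,B,C)|$ divided by the number of ordered triples of distinct vertices in $A\times B\times C$. *)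

(* Defs.v *)
From mathcomp Require Import all_boot all_order all_algebra.
From mathcomp Require Import reals.
Set Implicit Arguments. Unset Strict Implicit. Unset Printing Implicit Defensive.
Import Order.TTheory GRing.Theory Num.Theory.

Definition TT_arc (chi : nat) (i j : 'I_chi) : bool := (i < j)%N.

(* F is a 3-graph on the finite vertex type V with edge set E (a set of
   3-element vertex sets), and cls assigns each vertex its class index. *)
Definition sub_tournament_hypergraph (chi : nat) (T : 'I_chi -> 'I_chi -> bool)
  (V : finType) (cls : V -> 'I_chi) (E : {set {set V}}) : Prop :=
  forall e, e \in E -> exists x y z : V,
    [/\ e = [set x; y; z], [&& x != y, x != z & y != z],
        cls x = cls y & T (cls x) (cls z)].

Definition vclass (chi : nat) (V : finType) (cls : V -> 'I_chi) (i : 'I_chi)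
  : {set V} := [set v | cls v == i].

Definition dist_triples (V : finType) (A B C : {set V}) : {set V * V * V} :=
  [set t : V * V * V | [&& t.1.1 \in A, t.1.2 \in B, t.2 \in C,
                          t.1.1 != t.1.2, t.1.1 != t.2 & t.1.2 != t.2]].

Definition edge_triples (V : finType) (E : {set {set V}}) (A B C : {set V})
  : {set V * V * V} :=
  [set t in dist_triples A B C | [set t.1.1; t.1.2; t.2] \in E].

Definition density (R : realType) (V : finType) (E : {set {set V}})
  (A B C : {set V}) : R :=
  (#|edge_triples E A B C|%:R / #|dist_triples A B C|%:R)%R.

(* F contains a copy of H(T,m): an injective map from the vertex set
   'I_chi * 'I_m of H(T,m) (class i = {i} x 'I_m) to V sending every edge
   {(i,a),(i,b),(j,c)} (a != b, (i,j) an arc) to an edge of F. *)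
Definition contains_H (chi m : nat) (T : 'I_chi -> 'I_chi -> bool)
  (V : finType) (E : {set {set V}}) : Prop :=
  exists f : 'I_chi * 'I_m -> V, injective f /\
    forall (i j : 'I_chi) (a b c : 'I_m), T i j -> a != b ->
      [set f (i, a); f (i, b); f (j, c)] \in E.

(* Main.v *)
Require Import Defs.
From mathcomp Require Import all_boot all_order all_algebra.
From mathcomp Require Import reals zify lra.
Set Implicit Arguments. Unset Strict Implicit. Unset Printing Implicit Defensive.
Import Order.TTheory GRing.Theory Num.Theory.

Section Count.
Variables (I V T : finType) (F : I -> {set V}).

Definition Om := @setXn I (fun _ : I => V) F.

Lemma card_Om : #|Om| = \prod_k #|F k|.
Proof. exact: cardsXn. Qed.

Lemma in_Om (g : {ffun I -> V}) : (g \in Om) = [forall k, g k \in F k].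
Proof. by rewrite in_setXn. Qed.

Lemma card_fix (K : {set I}) (h : I -> V) :
  (forall k, k \in K -> h k \in F k) ->
  #|[set g in Om | [forall k in K, g k == h k]]| * \prod_(k in K) #|F k| = #|Om|.
Proof.
move=> hF.
pose F' k := if k \in K then [set h k] else F k.
have -> : [set g in Om | [forall k in K, g k == h k]] = @setXn I (fun _ : I => V) F'.
  apply/setP=> g; rewrite !inE; apply/andP/forallP.
  - move=> [/forallP H1 /forallP H2] k; rewrite /= /F'; case: ifP => kK.
      by have := H2 k; rewrite kK /= => /eqP ->; rewrite inE.
    exact: H1.
  - move=> H; split; apply/forallP=> k; have := H k; rewrite /= /F'; case: ifP => kK //=.
      by rewrite inE => /eqP ->; apply: hF.
    by rewrite inE => /eqP ->.
rewrite cardsXn card_Om (bigID (mem K)) /= [in RHS](bigID (mem K)) /= mulnC mulnA.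
congr (_ * _); last by apply: eq_bigr => k /negbTE; rewrite /F' => ->.
rewrite -big_split /=; apply: eq_bigr => k kK; rewrite /F' kK cards1 muln1 //.
Qed.

Lemma count_event (K : {set I}) (rho : {ffun I -> V} -> T) (h : T -> I -> V)
  (B : {set T}) :
  (forall t, t \in B -> forall k, k \in K -> h t k \in F k) ->
  (forall t g, t \in B -> (rho g == t) = [forall k in K, g k == h t k]) ->
  #|[set g in Om | rho g \in B]| * \prod_(k in K) #|F k| = #|B| * #|Om|.
Proof.
move=> hF hrho.
rewrite -sum1_card (partition_big rho (mem B)) /=; last by move=> g; rewrite inE => /andP[].
rewrite big_distrl /= -sum1_card big_distrl /=.
apply: eq_bigr => t tB.
rewrite mul1n -(card_fix (hF t tB)); congr (_ * _).
rewrite -sum1_card; apply: eq_bigl => g; rewrite !inE -hrho //.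
by case: (rho g =P t) => [->|_]; rewrite ?tB ?andbT ?andbF.
Qed.
End Count.

Lemma count3 (I V : finType) (F : I -> {set V}) (k1 k2 k3 : I) (B : {set V * V * V}) :
  k1 != k2 -> k1 != k3 -> k2 != k3 ->
  (forall t, t \in B -> [/\ t.1.1 \in F k1, t.1.2 \in F k2 & t.2 \in F k3]) ->
  #|[set g in Om F | (g k1, g k2, g k3) \in B]| * (#|F k1| * #|F k2| * #|F k3|)
  = #|B| * #|Om F|.
Proof.
move=> n12 n13 n23 HB.
have n21 : k2 != k1 by rewrite eq_sym.
have n31 : k3 != k1 by rewrite eq_sym.
have n32 : k3 != k2 by rewrite eq_sym.
have -> : #|F k1| * #|F k2| * #|F k3| = \prod_(k in (k1 |: (k2 |: [set k3]))) #|F k|.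
  rewrite big_setU1 ?big_setU1 ?big_set1 /= ?inE ?mulnA //.
  by rewrite negb_or n12 n13.
apply: (count_event (h := fun t k => if k == k1 then t.1.1 else if k == k2 then t.1.2 else t.2)).
- move=> t /HB [h1 h2 h3] k; rewrite !inE => /or3P [] /eqP ->.
  + by rewrite eqxx.
  + by rewrite (negbTE n21) eqxx.
  + by rewrite (negbTE n31) (negbTE n32).
- move=> [[x y] z] g _ /=; apply/eqP/forallP.
  + case=> e1 e2 e3 k; apply/implyP; rewrite !inE => /or3P [] /eqP ->.
    * by rewrite eqxx e1.
    * by rewrite (negbTE n21) eqxx e2.
    * by rewrite (negbTE n31) (negbTE n32) e3.
  + move=> H.
    have := H k1; have := H k2; have := H k3; rewrite !inE !eqxx ?orbT /=.
    rewrite (negbTE n21) (negbTE n31) (negbTE n32).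
    by move=> /eqP -> /eqP -> /eqP ->.
Qed.

Lemma count2 (I V : finType) (F : I -> {set V}) (k1 k2 : I) (B : {set V * V}) :
  k1 != k2 ->
  (forall t, t \in B -> t.1 \in F k1 /\ t.2 \in F k2) ->
  #|[set g in Om F | (g k1, g k2) \in B]| * (#|F k1| * #|F k2|)
  = #|B| * #|Om F|.
Proof.
move=> n12 HB.
have n21 : k2 != k1 by rewrite eq_sym.
have -> : #|F k1| * #|F k2| = \prod_(k in (k1 |: [set k2])) #|F k|.
  by rewrite big_setU1 ?big_set1 /= ?inE.
apply: (count_event (h := fun t k => if k == k1 then t.1 else t.2)).
- move=> t /HB [h1 h2] k; rewrite !inE => /orP [] /eqP ->.
  + by rewrite eqxx.
  + by rewrite (negbTE n21).
- move=> [x y] g _ /=; apply/eqP/forallP.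
  + case=> e1 e2 k; apply/implyP; rewrite !inE => /orP [] /eqP ->.
    * by rewrite eqxx e1.
    * by rewrite (negbTE n21) e2.
  + move=> H.
    have := H k1; have := H k2; rewrite !inE !eqxx ?orbT /=.
    rewrite (negbTE n21).
    by move=> /eqP -> /eqP ->.
Qed.

Local Open Scope ring_scope.

Lemma dens_aux (R : realType) (N d e : nat) : (0 < N)%N -> (e <= d)%N ->
  1 - (N%:R : R)^-1 <= e%:R / d%:R -> ((d - e) * N <= d)%N.
Proof.
move=> N0 ed H.
case: (posnP d) => [->|d0]; first by rewrite sub0n.
have dR : (0 : R) < d%:R by rewrite ltr0n.
have NR : (0 : R) < N%:R by rewrite ltr0n.
rewrite ler_pdivlMr // in H.
rewrite -(ler_nat R) natrM natrB //.
have hx : (N%:R : R)^-1 * N%:R = 1 by rewrite mulVf // gt_eqF.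
set x := (N%:R : R)^-1 in H hx *.
set D := (d%:R : R) in H dR *.
set Ee := (e%:R : R) in H *.
set M := (N%:R : R) in NR hx *.
nra.
Qed.

Lemma card_bigcup_leq (I T : finType) (P : pred I) (S : I -> {set T}) :
  (#|\bigcup_(i | P i) S i| <= \sum_(i | P i) #|S i|)%N.
Proof.
apply: (@big_rec2 _ _ (fun (X : {set T}) (n : nat) => is_true (#|X| <= n)%N)) => [|i X n _ H]; first by rewrite cards0.
by rewrite (leq_trans (leq_card_setU _ _).1) // leq_add2l.
Qed.

Theorem lemma5p4 (R : realType) (chi m : nat) :
  (2 <= chi)%N -> (2 <= m)%N ->
  exists gamma : R, 0 < gamma /\
    forall (V : finType) (cls : V -> 'I_chi) (E : {set {set V}}),
      sub_tournament_hypergraph (@TT_arc chi) cls E ->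
      (forall i : 'I_chi, gamma^-1 <= (#|vclass cls i|)%:R) ->
      (forall i j : 'I_chi, TT_arc i j ->
         1 - gamma <= density R E (vclass cls i) (vclass cls i) (vclass cls j)) ->
      contains_H m (@TT_arc chi) E.
Proof.
move=> hchi hm.
pose K0 := (chi * chi * m * m * m)%N.
pose N := (2 * K0).+1.
exists (N%:R^-1); split; first by rewrite invr_gt0 ltr0n.
move=> V cls E _ Hsize Hdens.
pose n i := #|vclass cls i|.
have hn : forall i, (N <= n i)%N.
  by move=> i; have := Hsize i; rewrite invrK ler_nat.
have N0 : (0 < N)%N by [].
have n0 : forall i, (0 < n i)%N by move=> i; exact: leq_trans N0 (hn i).
pose F : 'I_chi * 'I_m -> {set V} := fun k => vclass cls k.1.
pose P := #|Om F|.
have P0 : (0 < P)%N.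
  by rewrite /P card_Om prodn_gt0 // => k; exact: n0.
pose DA i j := dist_triples (vclass cls i) (vclass cls i) (vclass cls j)
   :\: edge_triples E (vclass cls i) (vclass cls i) (vclass cls j).
pose badA (e : 'I_chi * 'I_chi * 'I_m * 'I_m * 'I_m) :=
  let: (i, j, a, b, c) := e in [set g in Om F | (g (i, a), g (i, b), g (j, c)) \in DA i j].
pose condA (e : 'I_chi * 'I_chi * 'I_m * 'I_m * 'I_m) :=
  let: (i, j, a, b, c) := e in (i < j)%N && (a != b).
pose diag i := [set (x, x) | x in vclass cls i].
pose badB (e : 'I_chi * 'I_m * 'I_m) :=
  let: (i, a, b) := e in [set g in Om F | (g (i, a), g (i, b)) \in diag i].
pose condB (e : 'I_chi * 'I_m * 'I_m) := let: (i, a, b) := e in a != b.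
have cA : forall e, condA e -> (#|badA e| * N <= P)%N.
  move=> [[[[i j] a] b] c] /andP [ij ab].
  have nij : i != j by rewrite neq_ltn ij.
  have k12 : (i, a) != (i, b) by rewrite xpair_eqE /= (negbTE ab) andbF.
  have k13 : (i, a) != (j, c) by rewrite xpair_eqE /= (negbTE nij).
  have k23 : (i, b) != (j, c) by rewrite xpair_eqE /= (negbTE nij).
  have hB : forall t, t \in DA i j ->
      [/\ t.1.1 \in F (i, a), t.1.2 \in F (i, b) & t.2 \in F (j, c)].
    move=> t; rewrite /DA inE => /andP[_]; rewrite /dist_triples inE.
    by case/and4P => h1 h2 h3 _; split.
  have HC : (#|badA (i, j, a, b, c)| * (n i * n i * n j) = #|DA i j| * P)%N
    := count3 k12 k13 k23 hB.
  have dA : (#|DA i j| * N <= n i * n i * n j)%N.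
    have sub : edge_triples E (vclass cls i) (vclass cls i) (vclass cls j)
        \subset dist_triples (vclass cls i) (vclass cls i) (vclass cls j).
      by apply/subsetP => t; rewrite inE => /andP[].
    rewrite /DA cardsD (setIidPr sub).
    apply: leq_trans (@dens_aux R _ _ _ N0 (subset_leq_card sub) (Hdens i j ij)) _.
    have -> : (n i * n i * n j)%N = #|setX (setX (vclass cls i) (vclass cls i)) (vclass cls j)|
      by rewrite !cardsX.
    apply: subset_leq_card; apply/subsetP => t; rewrite /dist_triples !inE.
    by case/and4P => -> -> -> _.
  rewrite -(@leq_pmul2r (n i * n i * n j)) ?muln_gt0 ?n0 //.
  rewrite mulnAC HC mulnAC [(P * _)%N]mulnC leq_pmul2r //.
have cB : forall e, condB e -> (#|badB e| * N <= P)%N.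
  move=> [[i a] b] ab.
  have k12 : (i, a) != (i, b) by rewrite xpair_eqE /= (negbTE ab) andbF.
  have hB : forall t, t \in diag i -> t.1 \in F (i, a) /\ t.2 \in F (i, b).
    by move=> t /imsetP [x xi ->].
  have HC : (#|badB (i, a, b)| * (n i * n i) = #|diag i| * P)%N := count2 k12 hB.
  have cd : #|diag i| = n i by rewrite card_imset // => x y [].
  rewrite cd mulnA [(n i * P)%N]mulnC in HC.
  have HC2 : (#|badB (i, a, b)| * n i = P)%N.
    by apply/eqP; rewrite -(eqn_pmul2r (n0 i)) HC.
  by rewrite -HC2 leq_mul2l hn orbT.
pose U := (\bigcup_(e | condA e) badA e) :|: (\bigcup_(e | condB e) badB e).
have [g gOm gU] : exists2 g, g \in Om F & g \notin U.
  case: (pickP [pred g in Om F | g \notin U]) => [g /andP[]|H]; first by exists g.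
  exfalso.
  have sub : Om F \subset U.
    by apply/subsetP => g gO; have := H g; rewrite /= gO /= => /negbFE.
  have h1 := subset_leq_card sub.
  have h2 : (#|U| <= \sum_(e | condA e) #|badA e| + \sum_(e | condB e) #|badB e|)%N.
    by rewrite (leq_trans (leq_card_setU _ _).1) // leq_add // card_bigcup_leq.
  have h3 : ((\sum_(e | condA e) #|badA e|) * N <= K0 * P)%N.
    rewrite big_distrl /=; apply: (@leq_trans (\sum_(e | condA e) P)).
      by apply: leq_sum => e /cA.
    rewrite sum_nat_cond_const leq_mul2r; apply/orP; right.
    by apply: leq_trans (max_card _) _; rewrite !card_prod !card_ord.
  have h4 : ((\sum_(e | condB e) #|badB e|) * N <= K0 * P)%N.
    rewrite big_distrl /=; apply: (@leq_trans (\sum_(e | condB e) P)).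
      by apply: leq_sum => e /cB.
    rewrite sum_nat_cond_const leq_mul2r; apply/orP; right.
    apply: leq_trans (max_card _) _; rewrite !card_prod !card_ord /K0.
    rewrite -!mulnA leq_pmul2l; last by lia.
    by rewrite mulnA leq_pmull //; lia.
  move: h1 h2 h3 h4; rewrite /N.
  set SA := (\sum_(e | condA e) #|badA e|)%N.
  set SB := (\sum_(e | condB e) #|badB e|)%N.
  rewrite -/P. nia.
have gF : forall k, cls (g k) = k.1.
  by move=> k; move: gOm; rewrite in_Om => /forallP /(_ k); rewrite /F inE => /eqP.
move: gU; rewrite in_setU negb_or => /andP[gA gB].
have gnA : forall e, condA e -> g \notin badA e.
  by move=> e ce; apply: contra gA => ge; apply/bigcupP; exists e.
have gnB : forall e, condB e -> g \notin badB e.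
  by move=> e ce; apply: contra gB => ge; apply/bigcupP; exists e.
have inj : injective (fun k => g k).
  move=> [i a] [i' a'] /= eq.
  have ii : i = i' by have := gF (i, a); rewrite eq gF.
  subst i'; case: (eqVneq a a') => [->//|neq]; exfalso.
  have := gnB (i, a, a') neq; rewrite /badB inE gOm /= eq; apply/negP/negPn.
  by apply/imsetP; exists (g (i, a')) => //; rewrite inE gF.
exists (fun k => g k); split => // i j a b c ij ab.
have := gnA (i, j, a, b, c) (introT andP (conj ij ab)).
rewrite /badA inE gOm /= /DA !inE negb_and negbK => /orP[|].
  by case/andP.
have ne1 : g (i, a) != g (i, b) by apply/eqP => /inj [] /eqP; rewrite (negbTE ab).
have nij : i != j by rewrite neq_ltn; move: ij; rewrite /TT_arc => ->.
have ne2 : g (i, a) != g (j, c) by apply/eqP => /(congr1 cls); rewrite !gF /= => /eqP; rewrite (negbTE nij).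
have ne3 : g (i, b) != g (j, c) by apply/eqP => /(congr1 cls); rewrite !gF /= => /eqP; rewrite (negbTE nij).
by rewrite /= !gF /= !eqxx ne1 ne2 ne3.
Qed.
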